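(* Let $B>0$, $C\in\mathbb{R}$ and $\mu\in\mathbb{R}$. On $\ell^2(\mathbb{N}_0)$ with standard orthonormal basis $(e_k)_{k\ge 0}$, let $H$ be the bounded self-adjoint Jacobi operator $$H e_0=\mu e_0+C e_1,\qquad H e_1=C e_0+B e_2,\qquad H e_k=B e_{k-1}+B e_{k+1}\ (k\ge 2),$$ i.e. the tridiagonal matrix with diagonal $(\mu,0,0,\dots)$ and off-diagonal $(C,B,B,\dots)$. Put $\mu_B=\mu/B$ and $C_B=C/B$, and assume the decay condition: if $C\neq B$, $$2\,|1-C_B^2|<\Big|\,|\mu_B|-\sqrt{\mu_B^2+4C_B^2-4}\,\Big|,$$ and if $C=B$, $|\mu_B|<1$. Fix a finite index $j\ge 0$ and let $\psi(t)=e^{-iHt}e_j$. Then $$\lim_{t\to+\infty}\langle n_j(t)\rangle=\lim_{t\to+\infty}|\langle e_j,\psi(t)\rangle|^2=0 .$$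
   Context: $n_j=e_je_j^\dagger$ denotes the projection onto $e_j$, and $\langle n_j(t)\rangle=\langle \psi(t),n_j\psi(t)\rangle$ is its expectation value in the time-evolved state $\psi(t)=e^{-iHt}e_j$ (units with $\hbar=1$). In the decay condition, when $\mu_B^2+4C_B^2-4<0$ the square root is the principal complex square root and the outer $|\cdot|$ is the complex modulus. *)

(* Defs.v *)
From Stdlib Require Import Reals.
From Coquelicot Require Import Coquelicot.
Open Scope R_scope.

(* Matrix entries H_{k m} of the Jacobi operator on l^2(N_0):
   diagonal (mu,0,0,...), off-diagonal (C,B,B,...). *)
Definition Hent (mu B Cc : R) (k m : nat) : R :=
  if Nat.eqb k m then (if Nat.eqb k 0 then mu else 0)
  else if orb (Nat.eqb (S k) m) (Nat.eqb k (S m)) then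
         (if Nat.eqb (Nat.min k m) 0 then Cc else B)
  else 0.

(* Matrix entries of H^n: (H^{n+1})_{kl} = sum_m H_{km} (H^n)_{ml};
   since H is tridiagonal only m = k-1, k, k+1 contribute. *)
Fixpoint Hpow (mu B Cc : R) (n : nat) (k l : nat) : R :=
  match n with
  | O => if Nat.eqb k l then 1 else 0
  | S n' =>
      (match k with O => 0 | S k' => Hent mu B Cc k k' * Hpow mu B Cc n' k' l end)
      + Hent mu B Cc k k * Hpow mu B Cc n' k l
      + Hent mu B Cc k (S k) * Hpow mu B Cc n' (S k) l
  end.

Definition expTerm (mu B Cc t : R) (k l n : nat) : C :=
  Cmult (Cdiv (Cpow (Cmult (Copp Ci) (RtoC t)) n) (RtoC (INR (Factorial.fact n))))
        (RtoC (Hpow mu B Cc n k l)).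

(* <e_k, e^{-iHt} e_l> = sum_n (-iHt)^n/n! matrix entry (operator-norm convergent
   exponential series), summed via its real and imaginary parts. *)
Definition amp (mu B Cc t : R) (k l : nat) : C :=
  (Series (fun n => Re (expTerm mu B Cc t k l n)),
   Series (fun n => Im (expTerm mu B Cc t k l n))).

Definition csqrtR (x : R) : C :=
  if Rle_dec 0 x then RtoC (sqrt x) else (0, sqrt (- x)).

Definition decay_condition (mu B Cc : R) : Prop :=
  let muB := mu / B in
  let CB := Cc / B in
  (Cc <> B -> 2 * Rabs (1 - CB ^ 2) <
             Cmod (Cminus (RtoC (Rabs muB)) (csqrtR (muB ^ 2 + 4 * CB ^ 2 - 4))))
  /\ (Cc = B -> Rabs muB < 1).

(* Main.v *)
Require Import Defs.
From Stdlib Require Import Reals Lra Lia Psatz Arith.Factorial.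
From Coquelicot Require Import Coquelicot.
Open Scope R_scope.

Definition Good (m a : R) : Prop :=
  (a = 0 /\ Rabs m < 1) \/
  (a <> 0 /\ exists x1 x2 : C, Cplus x1 x2 = RtoC (- m / a) /\
      Cmult x1 x2 = RtoC (- 1 / a) /\ 1 < Cmod x1 /\ 1 < Cmod x2).

Definition Dr (m a x : R) := 1 - m * cos x - a * cos (2 * x).
Definition Di (m a x : R) := - (m * sin x + a * sin (2 * x)).
Definition Dsq (m a x : R) := Dr m a x ^ 2 + Di m a x ^ 2.

Lemma Cmod_z (x : R) : Cmod (cos x, sin x) = 1.
Proof. unfold Cmod. simpl. pose proof (sin2_cos2 x). unfold Rsqr in H. replace (cos x * (cos x * 1) + sin x * (sin x * 1)) with 1 by nra. apply sqrt_1. Qed.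
Lemma Cmod_sub_ge (x z : C) : Cmod x - Cmod z <= Cmod (z - x).
Proof.
  assert (x = (- (z - x) + z)%C) by ring.
  pose proof (Cmod_triangle (- (z - x)) z). rewrite <- H, Cmod_opp in H0. lra.
Qed.

Lemma Dsq_lower (m a : R) : Good m a -> exists d, 0 < d /\ forall x, d <= Dsq m a x.
Proof.
  intros HG.
  assert (HD : forall x, Dsq m a x = Cmod ((1 - RtoC m * (cos x, sin x) - RtoC a * (cos x, sin x) * (cos x, sin x))%C) ^ 2).
  { intros x. rewrite Cmod2_alt. unfold Dsq, Dr, Di. rewrite cos_2a, sin_2a. simpl. ring. }
  destruct HG as [[Ha Hm] | [Ha (x1 & x2 & Hs & Hp & H1 & H2)]].
  - exists ((1 - Rabs m) ^ 2). split. apply pow_lt; lra.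
    intros x. rewrite HD. subst a. apply pow_incr. split. lra.
    pose proof (Cmod_sub_ge 1 (RtoC m * (cos x, sin x))).
    rewrite Cmod_mult, Cmod_z, !Cmod_R, Rabs_R1 in H.
    replace (RtoC m * (cos x, sin x) - 1)%C with (- (1 - RtoC m * (cos x, sin x)))%C in H by ring.
    rewrite Cmod_opp in H.
    replace ((1 - RtoC m * (cos x, sin x) - RtoC 0 * (cos x, sin x) * (cos x, sin x))%C)
      with ((1 - RtoC m * (cos x, sin x))%C). lra.
    apply injective_projections; simpl; ring.
  - assert (Hf : forall x, (1 - RtoC m * (cos x, sin x) - RtoC a * (cos x, sin x) * (cos x, sin x))%C
        = (- RtoC a * (((cos x, sin x) - x1) * ((cos x, sin x) - x2)))%C).
    { intros x. assert (Ha' : RtoC a <> 0%C) by (intro E; apply Ha; now injection E).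
      replace (((cos x, sin x) - x1) * ((cos x, sin x) - x2))%C with
        ((cos x, sin x) * (cos x, sin x) - (x1 + x2) * (cos x, sin x) + x1 * x2)%C by ring.
      rewrite Hs, Hp.
      replace (RtoC (- m / a)) with (- RtoC m / RtoC a)%C
        by (unfold Rdiv, Cdiv; rewrite RtoC_mult, RtoC_inv, ?RtoC_opp; auto).
      replace (RtoC (- 1 / a)) with (- 1 / RtoC a)%C
        by (unfold Rdiv, Cdiv; rewrite RtoC_mult, RtoC_inv, ?RtoC_opp; auto).
      field. auto. }
    set (d := Rabs a * (Cmod x1 - 1) * (Cmod x2 - 1)).
    assert (0 < d). { unfold d. apply Rmult_lt_0_compat. apply Rmult_lt_0_compat. apply Rabs_pos_lt; auto. lra. lra. }
    exists (d ^ 2). split. apply pow_lt; lra.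
    intros x. rewrite HD, Hf. apply pow_incr. split. lra.
    rewrite !Cmod_mult, Cmod_opp, Cmod_R.
    pose proof (Cmod_sub_ge x1 (cos x, sin x)). pose proof (Cmod_sub_ge x2 (cos x, sin x)).
    rewrite Cmod_z in H0, H3. unfold d. rewrite Rmult_assoc.
    apply Rmult_le_compat_l. apply Rabs_pos.
    apply Rmult_le_compat; lra.
Qed.

Lemma Dsq_pos (m a : R) : Good m a -> forall x, 0 < Dsq m a x.
Proof. intros HG x. destruct (Dsq_lower m a HG) as (d & Hd & H). specialize (H x). lra. Qed.

Definition ReP (m a : R) (n : nat) (x : R) :=
  (cos (INR n * x) * Dr m a x + sin (INR n * x) * Di m a x) / Dsq m a x.
Definition ImP (m a : R) (n : nat) (x : R) :=
  (sin (INR n * x) * Dr m a x - cos (INR n * x) * Di m a x) / Dsq m a x.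

Lemma ReP_rel (m a : R) (n : nat) (x : R) : 0 < Dsq m a x ->
  ReP m a n x - m * ReP m a (S n) x - a * ReP m a (S (S n)) x = cos (INR n * x).
Proof.
  intros H. unfold ReP.
  replace (INR (S (S n)) * x) with (INR n * x + 2 * x) by (rewrite !S_INR; ring).
  replace (INR (S n) * x) with (INR n * x + x) by (rewrite !S_INR; ring).
  rewrite !cos_plus, !sin_plus.
  set (c0 := cos (INR n * x)). set (s0 := sin (INR n * x)).
  match goal with |- ?A / ?D - m * (?B / _) - a * (?C / _) = _ =>
    assert (E : A - m * B - a * C = c0 * D) by (unfold Dsq, Dr, Di; ring);
    replace (A / D - m * (B / D) - a * (C / D)) with ((A - m * B - a * C) / D) by (field; lra)
  end.
  rewrite E. field. lra.
Qed.

Lemma ImP_rel (m a : R) (n : nat) (x : R) : 0 < Dsq m a x ->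
  ImP m a n x - m * ImP m a (S n) x - a * ImP m a (S (S n)) x = sin (INR n * x).
Proof.
  intros H. unfold ImP.
  replace (INR (S (S n)) * x) with (INR n * x + 2 * x) by (rewrite !S_INR; ring).
  replace (INR (S n) * x) with (INR n * x + x) by (rewrite !S_INR; ring).
  rewrite !cos_plus, !sin_plus.
  set (c0 := cos (INR n * x)). set (s0 := sin (INR n * x)).
  match goal with |- ?A / ?D - m * (?B / _) - a * (?C / _) = _ =>
    assert (E : A - m * B - a * C = s0 * D) by (unfold Dsq, Dr, Di; ring);
    replace (A / D - m * (B / D) - a * (C / D)) with ((A - m * B - a * C) / D) by (field; lra)
  end.
  rewrite E. field. lra.
Qed.

Lemma Cmod_gt1_of_sq (x : C) : 1 < fst x ^ 2 + snd x ^ 2 -> 1 < Cmod x.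
Proof.
  intros H. unfold Cmod. rewrite <- sqrt_1. apply sqrt_lt_1_alt. lra.
Qed.

Lemma decay_good (B Cc mu : R) : 0 < B -> decay_condition mu B Cc ->
  Good (mu / B) ((Cc / B) ^ 2 - 1).
Proof.
  intros HB [H1 H2].
  set (m := mu / B) in *. set (cb := Cc / B) in *.
  destruct (Req_dec Cc B) as [E|E].
  { left. split. unfold cb. rewrite E. field. lra. auto. }
  specialize (H1 E).
  destruct (Req_dec (cb ^ 2 - 1) 0) as [Ea|Ea].
  { exfalso. assert (cb ^ 2 = 1) by lra.
    replace (m ^ 2 + 4 * cb ^ 2 - 4) with (m ^ 2) in H1 by lra.
    unfold csqrtR in H1. destruct (Rle_dec 0 (m ^ 2)) as [_|N]; [|nra].
    replace (sqrt (m^2)) with (Rabs m) in H1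
      by (rewrite <- pow2_abs; rewrite sqrt_pow2; [auto|apply Rabs_pos]).
    unfold Cminus in H1.
    replace ((RtoC (Rabs m) + - RtoC (Rabs m))%C) with (RtoC 0) in H1
      by (apply injective_projections; simpl; ring).
    rewrite Cmod_0 in H1. rewrite H in H1. rewrite Rminus_eq_0, Rabs_R0 in H1. lra. }
  right. split; [exact Ea|].
  set (a := cb ^ 2 - 1) in *.
  set (d := m ^ 2 + 4 * cb ^ 2 - 4) in *.
  assert (Hd : d = m ^ 2 + 4 * a) by (unfold d, a; ring).
  assert (Hs : exists sr si, csqrtR d = (sr, si) /\ 0 <= sr /\ sr * si = 0 /\
                sr ^ 2 - si ^ 2 = d).
  { unfold csqrtR. destruct (Rle_dec 0 d) as [P|P].
    - exists (sqrt d), 0. split; [reflexivity|]. split; [apply sqrt_pos|].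
      split; [ring|]. rewrite pow2_sqrt by lra. ring.
    - exists 0, (sqrt (- d)). split; [reflexivity|]. split; [lra|].
      split; [ring|]. rewrite pow2_sqrt by lra. ring. }
  destruct Hs as (sr & si & Es & Psr & Psi & Pd).
  rewrite Es in H1.
  assert (EC : Cmod (Cminus (RtoC (Rabs m)) (sr, si)) = sqrt ((Rabs m - sr)^2 + si^2))
    by (unfold Cmod; f_equal; simpl; ring).
  rewrite EC in H1.
  set (sg := if Rle_dec 0 m then 1 else -1).
  assert (Hsg : sg * sg = 1 /\ sg * m = Rabs m).
  { unfold sg. destruct (Rle_dec 0 m). split. ring. rewrite Rabs_pos_eq; lra.
    split. ring. rewrite Rabs_left; lra. }
  destruct Hsg as [Hsg1 Hsg2].
  assert (Habs : Rabs a = Rabs (1 - cb ^ 2)).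
  { unfold a. rewrite <- Rabs_Ropp. f_equal. ring. }
  rewrite <- Habs in H1.
  assert (Hq : 4 * a ^ 2 < (Rabs m - sr) ^ 2 + si ^ 2).
  { assert (0 <= 2 * Rabs a) by (pose proof (Rabs_pos a); lra).
    apply Rsqr_incrst_1 in H1; [|lra|apply sqrt_pos].
    unfold Rsqr in H1. rewrite sqrt_sqrt in H1 by (apply Rplus_le_le_0_compat; apply pow2_ge_0).
    replace ((2 * Rabs a) * (2 * Rabs a)) with (4 * (Rabs a)^2) in H1 by ring.
    rewrite pow2_abs in H1. lra. }
  assert (Ha2 : 0 < a ^ 2) by (apply pow2_gt_0; auto). 
  exists (((- m + sg * sr) / (2 * a)), (sg * si / (2 * a))).
  exists (((- m - sg * sr) / (2 * a)), (- sg * si / (2 * a))).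
  repeat split.
  - apply injective_projections; simpl; field; auto.
  - apply injective_projections; simpl.
    + replace ((- m + sg * sr) / (2 * a) * ((- m - sg * sr) / (2 * a)) -
        sg * si / (2 * a) * (- sg * si / (2 * a)))
        with ((m^2 - sg*sg*(sr^2 - si^2))/(4*a^2)) by (field; auto).
      rewrite Hsg1, Pd, Hd. field; auto.
    + replace ((- m + sg * sr) / (2 * a) * (- sg * si / (2 * a)) +
        sg * si / (2 * a) * ((- m - sg * sr) / (2 * a)))
        with (-2*sg*sg*(sr*si)/(4*a^2)) by (field; auto).
      rewrite Psi. field; auto.
  - apply Cmod_gt1_of_sq. simpl.
    replace (((- m + sg * sr) / (2 * a)) * (((- m + sg * sr) / (2 * a)) * 1) +
      (sg * si / (2 * a)) * ((sg * si / (2 * a)) * 1))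
      with (((Rabs m - sr) ^ 2 + si ^ 2) / (4 * a ^ 2)).
    apply Rmult_lt_reg_r with (4 * a ^ 2); [nra|]. field_simplify; nra.
    rewrite <- Hsg2. field_simplify; auto. replace (sg ^ 2) with 1 by (simpl; nra). field. auto.
  - apply Cmod_gt1_of_sq. simpl.
    replace (((- m - sg * sr) / (2 * a)) * (((- m - sg * sr) / (2 * a)) * 1) +
      (- sg * si / (2 * a)) * ((- sg * si / (2 * a)) * 1))
      with (((Rabs m + sr) ^ 2 + si ^ 2) / (4 * a ^ 2)).
    apply Rmult_lt_reg_r with (4 * a ^ 2); [nra|]. field_simplify; auto.
    assert (0 <= Rabs m) by apply Rabs_pos. nra.
    rewrite <- Hsg2. field_simplify; auto. replace (sg ^ 2) with 1 by (simpl; nra). field. auto.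
Qed.

Lemma bernoulli (r : R) (k : nat) : 0 <= r -> 1 + INR k * r <= (1 + r) ^ k.
Proof.
  intros Hr. induction k. simpl. lra.
  rewrite S_INR. simpl. 
  assert (0 <= INR k * r) by (apply Rmult_le_pos; auto; apply pos_INR).
  assert (0 <= INR k * r * r) by (apply Rmult_le_pos; auto).
  nra.
Qed.

Lemma growth (x v : C) (K : R) : 1 < Cmod x ->
  (forall k, Cmod (Cpow x k * v) <= K) -> v = 0%C.
Proof.
  intros Hx HK. destruct (Ceq_dec v 0) as [E|E]; auto. exfalso.
  apply Cmod_gt_0 in E.
  set (r := Cmod x - 1).
  destruct (archimed (K / (Cmod v * r))) as [Ha _].
  assert (0 <= IZR (up (K / (Cmod v * r)))).
  { assert (0 <= K). { specialize (HK O). pose proof (Cmod_ge_0 (Cpow x 0 * v)). lra. }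
    assert (0 <= K / (Cmod v * r)). { apply Rdiv_le_0_compat; auto. unfold r. nra. }
    lra. }
  destruct (IZN (up (K / (Cmod v * r)))) as [k Hk]. apply le_IZR; auto.
  rewrite Hk, <- INR_IZR_INZ in Ha.
  specialize (HK k). rewrite Cmod_mult, Cmod_pow in HK.
  pose proof (bernoulli r k ltac:(unfold r; lra)).
  replace (1 + r) with (Cmod x) in H0 by (unfold r; ring).
  assert (K / (Cmod v * r) * (Cmod v * r) = K) by (field; unfold r; split; lra).
  assert (INR k * (Cmod v * r) > K / (Cmod v * r) * (Cmod v * r)).
  { apply Rmult_gt_compat_r; auto. unfold r; nra. }
  assert (Cmod x ^ k * Cmod v >= (1 + INR k * r) * Cmod v) by nra.
  nra.
Qed.

Lemma Cpow_shift (f : nat -> C) (q : C) (n0 : nat) :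
  (forall n, (n0 <= n)%nat -> f (S n) = (q * f n)%C) ->
  forall k, f (n0 + k)%nat = (Cpow q k * f n0)%C.
Proof.
  intros H k. induction k. simpl. rewrite Nat.add_0_r. ring.
  rewrite Nat.add_succ_r, H by lia. rewrite IHk. simpl. ring.
Qed.

Lemma C_eq_from (A B X : C) : X = 0%C -> (A - B = X)%C -> A = B.
Proof. intros H1 H2. rewrite H1 in H2. rewrite <- (Cplus_0_r B), <- H2. ring. Qed.

Lemma rec_zero (m a : R) (J : nat -> C) (K : R) :
  ((a = 0 /\ Rabs m < 1) \/
  (a <> 0 /\ exists x1 x2 : C, Cplus x1 x2 = RtoC (- m / a) /\
      Cmult x1 x2 = RtoC (- 1 / a) /\ 1 < Cmod x1 /\ 1 < Cmod x2)) ->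
  (forall n, Cmod (J n) <= K) ->
  (forall n, (1 <= n)%nat -> (J n - RtoC m * J (S n) - RtoC a * J (S (S n)) = 0)%C) ->
  forall n, (1 <= n)%nat -> J n = 0%C.
Proof.
  intros HG HK HR.
  destruct HG as [[Ha Hm] | [Ha (x1 & x2 & Hs & Hp & H1 & H2)]].
  - subst a. destruct (Req_dec m 0) as [Hm0|Hm0].
    + intros n Hn. specialize (HR n Hn). subst m.
      apply (C_eq_from _ _ _ HR). ring.
    + assert (Hrec : forall n, (1 <= n)%nat -> J (S n) = (RtoC (/ m) * J n)%C).
      { intros n Hn. specialize (HR n Hn).
        assert (J n = RtoC m * J (S n))%C.
        { apply (C_eq_from _ _ _ HR). ring. }
        rewrite H. rewrite Cmult_assoc. rewrite <- RtoC_mult.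
        rewrite Rinv_l by auto. ring. }
      intros n Hn. apply (growth (RtoC (/ m)) (J n) K).
      * rewrite Cmod_R. rewrite Rabs_inv. rewrite <- Rinv_1.
        apply Rinv_lt_contravar. apply Rmult_lt_0_compat; try lra.
        apply Rabs_pos_lt; auto. auto.
      * intros k. rewrite <- (Cpow_shift J _ n); auto.
        intros p Hp. apply Hrec. lia.
  - assert (Hrec : forall n, (1 <= n)%nat ->
      J (S (S n)) = ((x1 + x2) * J (S n) - x1 * x2 * J n)%C).
    { intros n Hn. specialize (HR n Hn). rewrite Hs, Hp.
      assert (Ha' : RtoC a <> 0%C) by (intro E; apply Ha; now injection E).
      replace (RtoC (- m / a)) with (- RtoC m / RtoC a)%C
        by (unfold Rdiv, Cdiv; rewrite RtoC_mult, RtoC_inv, ?RtoC_opp; auto).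
      replace (RtoC (- 1 / a)) with (- 1 / RtoC a)%C
        by (unfold Rdiv, Cdiv; rewrite RtoC_mult, RtoC_inv, ?RtoC_opp; auto).
      apply (C_eq_from _ _ ((-1 / RtoC a) * (J n - RtoC m * J (S n) - RtoC a * J (S (S n))))%C).
      rewrite HR. ring. field. auto. }
    set (u := fun n => (J (S n) - x1 * J n)%C).
    assert (Hu : forall n, (1 <= n)%nat -> u (S n) = (x2 * u n)%C).
    { intros n Hn. unfold u. rewrite Hrec by auto. ring. }
    assert (Hu0 : forall n, (1 <= n)%nat -> u n = 0%C).
    { intros n Hn. apply (growth x2 (u n) (K + Cmod x1 * K)); auto.
      intros k. rewrite <- (Cpow_shift u _ n).
      2:{ intros q Hq. apply Hu. lia. }
      unfold u. eapply Rle_trans. apply Cmod_triangle.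
      rewrite Cmod_opp, Cmod_mult. pose proof (HK (S (n + k))). pose proof (HK (n+k)%nat).
      pose proof (Cmod_ge_0 x1). nra. }
    assert (HJ : forall n, (1 <= n)%nat -> J (S n) = (x1 * J n)%C).
    { intros n Hn. specialize (Hu0 n Hn). unfold u in Hu0.
      apply (C_eq_from _ _ _ Hu0). ring. }
    assert (J 1%nat = 0%C).
    { apply (growth x1 (J 1%nat) K); auto. intros k.
      rewrite <- (Cpow_shift J _ 1). auto. intros q Hq. apply HJ. lia. }
    intros n Hn. replace n with (1 + (n - 1))%nat by lia.
    rewrite (Cpow_shift J x1 1). rewrite H. ring. intros q Hq. apply HJ. lia.
Qed.

Lemma RInt_lin3 (f g h : R -> R) (a b m1 m2 : R) :
  ex_RInt f a b -> ex_RInt g a b -> ex_RInt h a b ->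
  RInt (fun x => f x - m1 * g x - m2 * h x) a b = RInt f a b - m1 * RInt g a b - m2 * RInt h a b.
Proof.
  intros Hf Hg Hh. apply is_RInt_unique.
  apply (is_RInt_minus _ _ a b _ _ (is_RInt_minus _ _ a b _ _ (RInt_correct f a b Hf)
     (is_RInt_scal _ a b m1 _ (RInt_correct g a b Hg)))
     (is_RInt_scal _ a b m2 _ (RInt_correct h a b Hh))).
Qed.

Lemma ReP_cont m a n x : Good m a -> continuous (ReP m a n) x.
Proof.
  intros HG. apply (ex_derive_continuous (ReP m a n)). pose proof (Dsq_pos m a HG x).
  unfold ReP, Dsq, Dr, Di in *. auto_derive. lra.
Qed.
Lemma ImP_cont m a n x : Good m a -> continuous (ImP m a n) x.
Proof.
  intros HG. apply (ex_derive_continuous (ImP m a n)). pose proof (Dsq_pos m a HG x).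
  unfold ImP, Dsq, Dr, Di in *. auto_derive. lra.
Qed.

Lemma int_cos_N (N : R) : N <> 0 -> sin (N * PI) = 0 ->
  is_RInt (fun x => cos (N * x)) (-PI) PI 0.
Proof.
  intros Hn Hs.
  replace 0 with (minus (sin (N * PI) / N) (sin (N * - PI) / N)).
  apply (is_RInt_derive (fun x => sin (N * x) / N)).
  + intros x _. auto_derive. auto. field. auto.
  + intros x _. apply (ex_derive_continuous (fun x => cos (N * x))). auto_derive. auto.
  + replace (N * - PI) with (- (N * PI)) by ring.
    rewrite sin_neg, Hs. unfold minus, plus, opp; simpl. field. auto.
Qed.

Lemma int_cos (n : nat) : RInt (fun x => cos (INR n * x)) (-PI) PI = if Nat.eqb n 0 then 2 * PI else 0.
Proof.
  destruct n as [|n].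
  - simpl. rewrite (RInt_ext _ (fun _ => 1)). rewrite RInt_const. 
    unfold scal; simpl; unfold mult; simpl. ring.
    intros x _. rewrite Rmult_0_l. apply cos_0.
  - simpl Nat.eqb. apply is_RInt_unique. apply int_cos_N.
    apply not_0_INR; lia.
    apply sin_eq_0_1. exists (Z.of_nat (S n)). rewrite <- INR_IZR_INZ. auto.
Qed.

Lemma int_sin_N (N : R) : is_RInt (fun x => sin (N * x)) (-PI) PI 0.
Proof.
  destruct (Req_dec N 0) as [E|E].
  - subst N. apply (is_RInt_ext (fun _ => 0)). intros; rewrite Rmult_0_l, sin_0; auto.
    pose proof (@is_RInt_const R_NormedModule (-PI) PI 0) as H0.
    unfold scal in H0; simpl in H0; unfold mult in H0; simpl in H0. rewrite Rmult_0_r in H0. exact H0.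
  - replace 0 with (minus (- cos (N * PI) / N) (- cos (N * - PI) / N)).
    apply (is_RInt_derive (fun x => - cos (N * x) / N)).
    + intros x _. auto_derive. auto. field. auto.
    + intros x _. apply (ex_derive_continuous (fun x => sin (N * x))). auto_derive. auto.
    + replace (N * - PI) with (- (N * PI)) by ring.
      rewrite cos_neg. unfold minus, plus, opp; simpl. field. auto.
Qed.

Definition Jc m a n : C := (RInt (ReP m a n) (-PI) PI, RInt (ImP m a n) (-PI) PI).

Lemma J_rel m a n : Good m a ->
  (Jc m a n - RtoC m * Jc m a (S n) - RtoC a * Jc m a (S (S n)))%C =
  ((if Nat.eqb n 0 then 2 * PI else 0), 0).
Proof.
  intros HG.
  assert (Ex : forall k, ex_RInt (ReP m a k) (-PI) PI)
    by (intros; apply (@ex_RInt_continuous R_CompleteNormedModule); intros; apply ReP_cont; auto).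
  assert (Ey : forall k, ex_RInt (ImP m a k) (-PI) PI)
    by (intros; apply (@ex_RInt_continuous R_CompleteNormedModule); intros; apply ImP_cont; auto).
  apply injective_projections; simpl.
  - transitivity (RInt (ReP m a n) (- PI) PI - m * RInt (ReP m a (S n)) (- PI) PI
            - a * RInt (ReP m a (S (S n))) (- PI) PI); [ring|].
    rewrite <- RInt_lin3 by auto.
    rewrite (RInt_ext _ (fun x => cos (INR n * x))).
    apply int_cos. intros x _. apply ReP_rel. apply Dsq_pos; auto.
  - transitivity (RInt (ImP m a n) (- PI) PI - m * RInt (ImP m a (S n)) (- PI) PI
            - a * RInt (ImP m a (S (S n))) (- PI) PI); [ring|].
    rewrite <- RInt_lin3 by auto.
    rewrite (RInt_ext _ (fun x => sin (INR n * x))).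
    apply is_RInt_unique, int_sin_N. intros x _. apply ImP_rel. apply Dsq_pos; auto.
Qed.

Lemma abs_lin3 (u v w p q : R) : Rabs p <= 1 -> Rabs q <= 1 ->
  Rabs (u - v * p - w * q) <= Rabs u + Rabs v + Rabs w.
Proof.
  intros Hp Hq. unfold Rminus. eapply Rle_trans. apply Rabs_triang.
  rewrite Rabs_Ropp, Rabs_mult.
  eapply Rle_trans. apply Rplus_le_compat_r. eapply Rle_trans. apply Rabs_triang.
  rewrite Rabs_Ropp, Rabs_mult. apply Rle_refl.
  pose proof (Rabs_pos v). pose proof (Rabs_pos w). nra.
Qed.

Lemma abs_comb (c s x y : R) : Rabs c <= 1 -> Rabs s <= 1 ->
  Rabs (c * x + s * y) <= Rabs x + Rabs y /\ Rabs (s * x - c * y) <= Rabs x + Rabs y.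
Proof.
  intros Hc Hs. pose proof (Rabs_pos x). pose proof (Rabs_pos y). split.
  - eapply Rle_trans. apply Rabs_triang. rewrite !Rabs_mult. nra.
  - unfold Rminus. eapply Rle_trans. apply Rabs_triang. rewrite Rabs_Ropp, !Rabs_mult. nra.
Qed.

Lemma P_bound m a : Good m a -> exists L, forall n x, Rabs (ReP m a n x) <= L /\ Rabs (ImP m a n x) <= L.
Proof.
  intros HG. destruct (Dsq_lower m a HG) as (d & Hd & Hl).
  exists ((2 * (1 + Rabs m + Rabs a)) / d). intros n x.
  assert (HDr : Rabs (Dr m a x) <= 1 + Rabs m + Rabs a).
  { unfold Dr. pose proof (abs_lin3 1 m a (cos x) (cos (2 * x))).
    rewrite Rabs_R1 in H. apply H; apply Rabs_le; apply COS_bound. }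
  assert (HDi : Rabs (Di m a x) <= Rabs m + Rabs a).
  { unfold Di. rewrite Rabs_Ropp. eapply Rle_trans. apply Rabs_triang. rewrite !Rabs_mult.
    pose proof (Rabs_pos m). pose proof (Rabs_pos a).
    assert (Rabs (sin x) <= 1) by (apply Rabs_le; apply SIN_bound).
    assert (Rabs (sin (2 * x)) <= 1) by (apply Rabs_le; apply SIN_bound).
    nra. }
  assert (Hc : Rabs (cos (INR n * x)) <= 1) by (apply Rabs_le; apply COS_bound).
  assert (Hs : Rabs (sin (INR n * x)) <= 1) by (apply Rabs_le; apply SIN_bound).
  destruct (abs_comb _ _ (Dr m a x) (Di m a x) Hc Hs) as [H1 H2].
  pose proof (Hl x). pose proof (Dsq_pos m a HG x).
  unfold ReP, ImP, Rdiv. rewrite !Rabs_mult, !Rabs_inv, !(Rabs_pos_eq (Dsq m a x)) by lra.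
  assert (/ Dsq m a x <= / d) by (apply Rinv_le_contravar; lra).
  assert (0 < / Dsq m a x) by (apply Rinv_0_lt_compat; lra).
  split; apply Rmult_le_compat; try apply Rabs_pos; try lra.
Qed.

Lemma Cmod_le_sum (z : C) : Cmod z <= Rabs (fst z) + Rabs (snd z).
Proof.
  destruct z as [x y]. unfold Cmod; simpl.
  rewrite <- (sqrt_pow2 (Rabs x + Rabs y)) by (pose proof (Rabs_pos x); pose proof (Rabs_pos y); lra).
  apply sqrt_le_1_alt. pose proof (Rabs_pos x). pose proof (Rabs_pos y).
  pose proof (pow2_abs x). pose proof (pow2_abs y). simpl in *. nra.
Qed.

Lemma J_vals m a : Good m a -> (forall n, (1 <= n)%nat -> Jc m a n = 0%C) /\ fst (Jc m a 0) = 2 * PI.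
Proof.
  intros HG. destruct (P_bound m a HG) as [L HL].
  assert (HK : forall n, Cmod (Jc m a n) <= 2 * (2 * PI * L)).
  { intros n. eapply Rle_trans. apply Cmod_le_sum. simpl.
    assert (forall f : R -> R, ex_RInt f (-PI) PI -> (forall x, Rabs (f x) <= L) -> Rabs (RInt f (-PI) PI) <= 2 * PI * L).
    { intros f Hf Hb. eapply Rle_trans. apply abs_RInt_le_const with (M := L); auto.
      pose proof PI_RGT_0; lra. right; ring. }
    pose proof (H (ReP m a n)). pose proof (H (ImP m a n)).
    assert (Rabs (RInt (ReP m a n) (-PI) PI) <= 2 * PI * L).
    { apply H. apply (@ex_RInt_continuous R_CompleteNormedModule); intros; apply ReP_cont; auto. intros; apply HL. }
    assert (Rabs (RInt (ImP m a n) (-PI) PI) <= 2 * PI * L).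
    { apply H. apply (@ex_RInt_continuous R_CompleteNormedModule); intros; apply ImP_cont; auto. intros; apply HL. }
    lra. }
  assert (H1 : forall n, (1 <= n)%nat -> Jc m a n = 0%C).
  { apply (rec_zero m a (Jc m a) _ HG HK). intros n Hn. rewrite J_rel by auto.
    destruct n. lia. reflexivity. }
  split; auto.
  pose proof (J_rel m a 0 HG). rewrite (H1 1%nat), (H1 2%nat) in H by lia.
  apply (f_equal fst) in H. simpl in H. unfold Jc; simpl. lra.
Qed.

Lemma cont_plus (f g : R -> R) x : continuous f x -> continuous g x -> continuous (fun y => f y + g y) x.
Proof. intros Hf Hg. exact (@continuous_plus R_UniformSpace R_AbsRing R_NormedModule f g x Hf Hg). Qed.
Lemma cont_mult (f g : R -> R) x : continuous f x -> continuous g x -> continuous (fun y => f y * g y) x.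
Proof. intros Hf Hg. exact (@continuous_mult R_UniformSpace R_AbsRing f g x Hf Hg). Qed.
Lemma cont_const (c x : R) : continuous (fun _ : R => c) x.
Proof. exact (@continuous_const R_UniformSpace R_UniformSpace c x). Qed.
Lemma cont_comp (f g : R -> R) x : continuous f x -> continuous g (f x) -> continuous (fun y => g (f y)) x.
Proof. intros Hf Hg. exact (@continuous_comp R_UniformSpace R_UniformSpace R_UniformSpace f g x Hf Hg). Qed.
Lemma cont_inv (f : R -> R) x : continuous f x -> f x <> 0 -> continuous (fun y => / f y) x.
Proof.
  intros Hf Hn. apply (cont_comp f Rinv). auto.
  apply continuity_pt_filterlim. apply continuity_pt_inv; auto. apply continuity_pt_id.
Qed.
Lemma cont_ext (f g : R -> R) x : (forall y, f y = g y) -> continuous f x -> continuous g x.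
Proof. intros E H. exact (@continuous_ext R_UniformSpace R_UniformSpace f g x E H). Qed.
Lemma deriv_cont (f : R -> R) x l : is_derive f x l -> continuous f x.
Proof. intros H. apply (ex_derive_continuous f). exists l; auto. Qed.

Definition SMd (f f' : R -> R) := forall x, is_derive f x (f' x) /\ continuous f' x.

Lemma SMd_cont f f' : SMd f f' -> forall x, continuous f x.
Proof. intros H x. apply (deriv_cont f x (f' x)). apply H. Qed.

Lemma SMd_ext f f' g g' : (forall x, f x = g x) -> (forall x, f' x = g' x) -> SMd f f' -> SMd g g'.
Proof.
  intros E1 E2 H x. destruct (H x) as [H1 H2]. split.
  - rewrite <- E2. apply (is_derive_ext f); auto.
  - apply (cont_ext f'); auto.
Qed.

Lemma SMd_const c : SMd (fun _ => c) (fun _ => 0).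
Proof. intros x. split. apply (@is_derive_const R_AbsRing R_NormedModule). apply cont_const. Qed.

Lemma SMd_cos : SMd cos (fun x => - sin x).
Proof.
  intros x. split. apply is_derive_cos.
  apply (cont_ext (fun x => (-1) * sin x)). intros; ring.
  apply cont_mult. apply cont_const. apply continuous_sin.
Qed.
Lemma SMd_sin : SMd sin cos.
Proof. intros x. split. apply is_derive_sin. apply continuous_cos. Qed.

Lemma SMd_plus f f' g g' : SMd f f' -> SMd g g' -> SMd (fun x => f x + g x) (fun x => f' x + g' x).
Proof.
  intros Hf Hg x. destruct (Hf x) as [F1 F2]. destruct (Hg x) as [G1 G2]. split.
  - exact (@is_derive_plus R_AbsRing R_NormedModule f g x _ _ F1 G1).
  - apply cont_plus; auto.
Qed.

Lemma SMd_mult f f' g g' : SMd f f' -> SMd g g' ->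
  SMd (fun x => f x * g x) (fun x => f' x * g x + f x * g' x).
Proof.
  intros Hf Hg x. destruct (Hf x) as [F1 F2]. destruct (Hg x) as [G1 G2]. split.
  - exact (@is_derive_mult R_AbsRing f g x _ _ F1 G1 Rmult_comm).
  - apply cont_plus; apply cont_mult; auto.
    apply (SMd_cont g g' Hg). apply (SMd_cont f f' Hf).
Qed.

Lemma SMd_scal k f f' : SMd f f' -> SMd (fun x => k * f x) (fun x => k * f' x).
Proof.
  intros Hf. apply (SMd_ext (fun x => k * f x) (fun x => 0 * f x + k * f' x)); auto.
  intros; ring. apply SMd_mult; auto. apply SMd_const.
Qed.

Lemma SMd_minus f f' g g' : SMd f f' -> SMd g g' -> SMd (fun x => f x - g x) (fun x => f' x - g' x).
Proof.
  intros Hf Hg. apply (SMd_ext (fun x => f x + (-1) * g x) (fun x => f' x + (-1) * g' x)).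
  intros; ring. intros; ring. apply SMd_plus; auto. apply SMd_scal; auto.
Qed.

Lemma SMd_inv f f' : SMd f f' -> (forall x, f x <> 0) -> SMd (fun x => / f x) (fun x => - f' x / f x ^ 2).
Proof.
  intros Hf Hn x. destruct (Hf x) as [F1 F2]. split.
  - apply is_derive_inv; auto.
  - unfold Rdiv. apply cont_mult.
    apply (cont_ext (fun x => (-1) * f' x)). intros; ring. apply cont_mult; auto. apply cont_const.
    apply cont_inv. apply cont_mult. apply (SMd_cont f f' Hf).
    apply cont_mult. apply (SMd_cont f f' Hf). apply cont_const.
    simpl. specialize (Hn x). rewrite Rmult_1_r. apply Rmult_integral_contrapositive; auto.
Qed.

Lemma SMd_pow f f' n : SMd f f' -> SMd (fun x => f x ^ n) (fun x => INR n * f x ^ (pred n) * f' x).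
Proof.
  intros Hf. induction n.
  - apply (SMd_ext (fun _ => 1) (fun _ => 0)). intros; reflexivity. intros; simpl; ring. apply SMd_const.
  - eapply SMd_ext; [| |apply (SMd_mult _ _ _ _ Hf IHn)].
    intros; simpl; ring. intros. rewrite S_INR. destruct n. simpl. ring. simpl pred. simpl. ring.
Qed.

Definition SM (f : R -> R) := exists f', SMd f f'.
Lemma SM_cont f : SM f -> forall x, continuous f x.
Proof. intros [f' H]. apply (SMd_cont f f' H). Qed.
Lemma SM_ext f g : (forall x, f x = g x) -> SM f -> SM g.
Proof. intros E [f' H]. exists f'. apply (SMd_ext f f'); auto. Qed.
Lemma SM_const c : SM (fun _ => c).
Proof. eexists. apply SMd_const. Qed.
Lemma SM_cos : SM cos. Proof. eexists. apply SMd_cos. Qed.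
Lemma SM_sin : SM sin. Proof. eexists. apply SMd_sin. Qed.
Lemma SM_plus f g : SM f -> SM g -> SM (fun x => f x + g x).
Proof. intros [f' Hf] [g' Hg]. eexists. apply SMd_plus; eauto. Qed.
Lemma SM_minus f g : SM f -> SM g -> SM (fun x => f x - g x).
Proof. intros [f' Hf] [g' Hg]. eexists. apply SMd_minus; eauto. Qed.
Lemma SM_mult f g : SM f -> SM g -> SM (fun x => f x * g x).
Proof. intros [f' Hf] [g' Hg]. eexists. apply SMd_mult; eauto. Qed.
Lemma SM_scal k f : SM f -> SM (fun x => k * f x).
Proof. intros [f' Hf]. eexists. apply SMd_scal; eauto. Qed.
Lemma SM_inv f : SM f -> (forall x, f x <> 0) -> SM (fun x => / f x).
Proof. intros [f' Hf] Hn. eexists. apply SMd_inv; eauto. Qed.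
Lemma SM_pow f n : SM f -> SM (fun x => f x ^ n).
Proof. intros [f' Hf]. eexists. apply SMd_pow; eauto. Qed.
Lemma SM_div f g : SM f -> SM g -> (forall x, g x <> 0) -> SM (fun x => f x / g x).
Proof. intros Hf Hg Hn. unfold Rdiv. apply SM_mult; auto. apply SM_inv; auto. Qed.
Lemma SM_cos2 : SM (fun x => cos (2 * x)).
Proof. apply (SM_ext (fun x => 2 * (cos x * cos x) - 1)). intros. rewrite cos_2a_cos. ring.
  apply SM_minus. apply SM_scal. apply SM_mult; apply SM_cos. apply SM_const. Qed.
Lemma SM_sin2 : SM (fun x => sin (2 * x)).
Proof. apply (SM_ext (fun x => 2 * (sin x * cos x))). intros. rewrite sin_2a. ring.
  apply SM_scal. apply SM_mult. apply SM_sin. apply SM_cos. Qed.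

Fixpoint Qp (cb m : R) (k : nat) (x : R) : R * R :=
  match k with
  | O => (cb ^ 2, 2 * x - m)
  | S k' => let p := Qp cb m k' x in (snd p, 2 * x * snd p - fst p)
  end.

Definition Wt (m a : R) (t : R) := sin t ^ 2 / (PI * Dsq m a t).

Definition Fs (m a t r : R) := sin ((r + 1) * t) - m * sin (r * t) - a * sin ((r - 1) * t).

Lemma Fs_rec m a t r : Fs m a t (r + 1) = 2 * cos t * Fs m a t r - Fs m a t (r - 1).
Proof.
  unfold Fs.
  replace ((r + 1 + 1) * t) with (r * t + 2 * t) by ring.
  replace ((r + 1) * t) with (r * t + t) by ring.
  replace ((r + 1 - 1) * t) with (r * t) by ring.
  replace ((r - 1 + 1) * t) with (r * t) by ring.
  replace ((r - 1 - 1) * t) with (r * t - 2 * t) by ring.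
  replace ((r - 1) * t) with (r * t - t) by ring.
  rewrite !sin_plus, !sin_minus, cos_2a_cos, sin_2a. ring.
Qed.

Lemma Q_sin cb m t k :
  fst (Qp cb m k (cos t)) * sin t = Fs m (cb ^ 2 - 1) t (INR k) /\
  snd (Qp cb m k (cos t)) * sin t = Fs m (cb ^ 2 - 1) t (INR k + 1).
Proof.
  induction k as [|k [IH1 IH2]].
  - simpl INR. unfold Fs. simpl. split.
    + replace ((0 - 1) * t) with (- t) by ring. rewrite sin_neg.
      replace ((0 + 1) * t) with t by ring. rewrite Rmult_0_l, sin_0. ring.
    + replace ((0 + 1 + 1) * t) with (2 * t) by ring. replace ((0 + 1 - 1) * t) with 0 by ring.
      replace ((0 + 1) * t) with t by ring. rewrite sin_0, sin_2a. ring.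
  - cbn [Qp fst snd]. rewrite S_INR. split; auto.
    replace ((2 * cos t * snd (Qp cb m k (cos t)) - fst (Qp cb m k (cos t))) * sin t)
      with (2 * cos t * (snd (Qp cb m k (cos t)) * sin t) - fst (Qp cb m k (cos t)) * sin t) by ring.
    rewrite IH1, IH2. rewrite (Fs_rec m (cb ^ 2 - 1) t (INR k + 1)). replace (INR k + 1 - 1) with (INR k) by ring. reflexivity.
Qed.

Lemma Qw cb m t k : 0 < Dsq m (cb ^ 2 - 1) t ->
  fst (Qp cb m k (cos t)) * Wt m (cb ^ 2 - 1) t =
  - (1 / (2 * PI)) * (ReP m (cb ^ 2 - 1) (S (S k)) t - ReP m (cb ^ 2 - 1) k t).
Proof.
  intros HD. set (a := cb ^ 2 - 1) in *.
  unfold Wt. replace (fst (Qp cb m k (cos t)) * (sin t ^ 2 / (PI * Dsq m a t)))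
    with ((fst (Qp cb m k (cos t)) * sin t) * sin t / (PI * Dsq m a t))
    by (field; pose proof PI_RGT_0; split; lra).
  rewrite (proj1 (Q_sin cb m t k)). fold a. unfold ReP, Fs.
  set (u := (INR k + 1) * t).
  replace (INR (S (S k)) * t) with (u + t) by (unfold u; rewrite !S_INR; ring).
  replace (INR k * t) with (u - t) by (unfold u; ring).
  replace ((INR k - 1) * t) with (u - 2 * t) by (unfold u; ring).
  rewrite cos_plus, sin_plus, cos_minus, !sin_minus.
  pose proof PI_RGT_0. unfold Dsq in *. set (D := Dr m a t ^ 2 + Di m a t ^ 2) in *. unfold Dr, Di. field. split; lra.
Qed.

Lemma int_Qw cb m k : Good m (cb ^ 2 - 1) ->
  RInt (fun t => fst (Qp cb m k (cos t)) * Wt m (cb ^ 2 - 1) t) (-PI) PI =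
  if Nat.eqb k 0 then 1 else 0.
Proof.
  intros HG. set (a := cb ^ 2 - 1) in *.
  rewrite (RInt_ext _ (fun t => (- (1 / (2 * PI))) * (ReP m a (S (S k)) t - ReP m a k t))).
  2:{ intros t _. apply Qw. apply Dsq_pos; auto. }
  assert (Ex : forall j, ex_RInt (ReP m a j) (-PI) PI)
    by (intros; apply (@ex_RInt_continuous R_CompleteNormedModule); intros; apply ReP_cont; auto).
  pose proof (is_RInt_scal _ _ _ (- (1 / (2 * PI))) _
     (is_RInt_minus _ _ _ _ _ _ (RInt_correct _ _ _ (Ex (S (S k)))) (RInt_correct _ _ _ (Ex k)))) as HI.
  rewrite (is_RInt_unique (fun t => (- (1 / (2 * PI))) * (ReP m a (S (S k)) t - ReP m a k t)) (-PI) PI _ HI).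
  destruct (J_vals m a HG) as [J1 J0].
  assert (E2 : RInt (ReP m a (S (S k))) (-PI) PI = 0).
  { pose proof (J1 (S (S k)) ltac:(lia)). apply (f_equal fst) in H. exact H. }
  unfold scal, minus, plus, opp; simpl; unfold mult; simpl. rewrite E2.
  pose proof PI_RGT_0.
  destruct k.
  - simpl. unfold Jc in J0. simpl in J0. rewrite J0. field. lra.
  - pose proof (J1 (S k) ltac:(lia)). apply (f_equal fst) in H0. unfold Jc in H0. simpl in H0.
    simpl. rewrite H0. ring.
Qed.

Definition Rrow (mu B Cc : R) (k : nat) (f : nat -> R) : R :=
  (match k with O => 0 | S k' => Hent mu B Cc k k' * f k' end)
  + Hent mu B Cc k k * f k + Hent mu B Cc k (S k) * f (S k).

Lemma Hpow_S mu B Cc n k l : Hpow mu B Cc (S n) k l = Rrow mu B Cc k (fun j => Hpow mu B Cc n j l).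
Proof. reflexivity. Qed.

Definition dlt (j l : nat) : R := if Nat.eqb j l then 1 else 0.

Ltac hent_tac := unfold Hent; repeat (destruct (Nat.eqb_spec _ _)); simpl; try lia; try reflexivity.

Lemma Hent_00 mu B Cc : Hent mu B Cc 0 0 = mu. Proof. reflexivity. Qed.
Lemma Hent_01 mu B Cc : Hent mu B Cc 0 1 = Cc. Proof. reflexivity. Qed.
Lemma Hent_10 mu B Cc : Hent mu B Cc 1 0 = Cc. Proof. reflexivity. Qed.
Lemma Hent_11 mu B Cc : Hent mu B Cc 1 1 = 0. Proof. reflexivity. Qed.
Lemma Hent_12 mu B Cc : Hent mu B Cc 1 2 = B. Proof. reflexivity. Qed.
Lemma Hent_diag mu B Cc k : Hent mu B Cc (S k) (S k) = 0.
Proof. unfold Hent. rewrite Nat.eqb_refl. reflexivity. Qed.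
Lemma Hent_up mu B Cc k : Hent mu B Cc (S k) (S (S k)) = B.
Proof.
  unfold Hent. destruct (Nat.eqb_spec (S k) (S (S k))); [lia|].
  rewrite (proj2 (Nat.eqb_eq (S (S k)) (S (S k))) eq_refl). simpl.
  reflexivity.
Qed.
Lemma Hent_down mu B Cc k : Hent mu B Cc (S (S k)) (S k) = B.
Proof.
  unfold Hent. destruct (Nat.eqb_spec (S (S k)) (S k)); [lia|].
  destruct (Nat.eqb_spec (S (S (S k))) (S k)); [lia|].
  rewrite (proj2 (Nat.eqb_eq (S (S k)) (S (S k))) eq_refl). simpl.
  reflexivity.
Qed.
Lemma Hent_far mu B Cc k l : k <> l -> S k <> l -> k <> S l -> Hent mu B Cc k l = 0.
Proof.
  intros H1 H2 H3. unfold Hent.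
  rewrite (proj2 (Nat.eqb_neq _ _) H1), (proj2 (Nat.eqb_neq _ _) H2), (proj2 (Nat.eqb_neq _ _) H3).
  reflexivity.
Qed.
Lemma Hent_sym mu B Cc k l : Hent mu B Cc k l = Hent mu B Cc l k.
Proof.
  unfold Hent. rewrite (Nat.eqb_sym k l).
  destruct (Nat.eqb_spec l k). subst. reflexivity.
  rewrite (Nat.eqb_sym (S k) l), (Nat.eqb_sym k (S l)), Bool.orb_comm, Nat.min_comm. reflexivity.
Qed.

Lemma Rrow_ext mu B Cc k f g : (forall j, f j = g j) -> Rrow mu B Cc k f = Rrow mu B Cc k g.
Proof. intros E. unfold Rrow. destruct k; rewrite !E; reflexivity. Qed.

Lemma Rrow_delta mu B Cc l k : Rrow mu B Cc l (fun j => dlt j k) = Hent mu B Cc l k.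
Proof.
  unfold Rrow, dlt. destruct l as [|l].
  - destruct (Nat.eqb_spec 0 k); destruct (Nat.eqb_spec 1 k); subst; try lia.
    + ring. + ring.
    + rewrite (Hent_far mu B Cc 0 k) by lia. ring.
  - destruct (Nat.eqb_spec l k); destruct (Nat.eqb_spec (S l) k); destruct (Nat.eqb_spec (S (S l)) k);
      subst; try lia; try ring.
    rewrite (Hent_far mu B Cc (S l) k) by lia. ring.
Qed.

Lemma ortho_abs mu B Cc (M : nat -> nat -> R) :
  (forall k, Hent mu B Cc k (S k) <> 0) ->
  (forall k l, M k l = M l k) ->
  (forall l, M 0%nat l = dlt 0 l) ->
  (forall k l, Rrow mu B Cc k (fun j => M j l) = Rrow mu B Cc l (fun j => M j k)) ->
  forall k l, M k l = dlt k l.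
Proof.
  intros Hnz Hsym H0 HR.
  assert (Hall : forall k j, (j <= k)%nat -> forall l, M j l = dlt j l).
  { induction k as [|k IH].
    - intros j Hj l. replace j with 0%nat by lia. auto.
    - intros j Hj l. destruct (Nat.eq_dec j (S k)) as [->|Hne]; [|apply IH; lia].
      assert (E1 : Rrow mu B Cc k (fun j => M j l) = Rrow mu B Cc k (fun j => dlt j l)).
      { rewrite HR. rewrite Rrow_delta.
        rewrite (Rrow_ext mu B Cc l _ (fun j => dlt j k)).
        rewrite Rrow_delta. apply Hent_sym.
        intros j. rewrite Hsym, IH by lia. unfold dlt. rewrite Nat.eqb_sym. reflexivity. }
      unfold Rrow in E1.
      assert (Ek : M k l = dlt k l) by (apply IH; lia).
      rewrite Ek in E1.
      destruct k as [|k'].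
      + specialize (Hnz 0%nat). 
        apply (Rmult_eq_reg_l (Hent mu B Cc 0 1)); auto. lra.
      + rewrite (IH k' ltac:(lia) l) in E1.
        specialize (Hnz (S k')).
        apply (Rmult_eq_reg_l (Hent mu B Cc (S k') (S (S k')))); auto. lra. }
  intros k l. apply (Hall k); lia.
Qed.

Lemma RInt_scalR (f : R -> R) a b k : ex_RInt f a b -> RInt (fun x => k * f x) a b = k * RInt f a b.
Proof. intros H. exact (@RInt_scal R_CompleteNormedModule f a b k H). Qed.
Lemma RInt_extR (f g : R -> R) a b : (forall x, Rmin a b < x < Rmax a b -> f x = g x) -> RInt f a b = RInt g a b.
Proof. intros H. exact (@RInt_ext R_CompleteNormedModule f g a b H). Qed.

Definition phi (cb m : R) (k : nat) (x : R) : R :=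
  match k with O => cb | _ => fst (Qp cb m k x) end.

Lemma eigen mu B Cc k x : B <> 0 ->
  Rrow mu B Cc k (fun j => phi (Cc / B) (mu / B) j x) = 2 * B * x * phi (Cc / B) (mu / B) k x.
Proof.
  intros HB. unfold Rrow.
  destruct k as [|[|k]].
  - rewrite Hent_00, Hent_01. simpl. field. auto.
  - rewrite Hent_10, Hent_11, Hent_12. simpl. field. auto.
  - rewrite Hent_down, Hent_diag, Hent_up. simpl. ring.
Qed.

Lemma SM_Qp cb m k : SM (fun t => fst (Qp cb m k (cos t))) /\ SM (fun t => snd (Qp cb m k (cos t))).
Proof.
  induction k as [|k [IH1 IH2]].
  - simpl. split. apply SM_const. apply SM_minus. apply SM_scal. apply SM_cos. apply SM_const.
  - simpl. split. auto. apply SM_minus; auto.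
    apply (SM_ext (fun t => 2 * (cos t * snd (Qp cb m k (cos t))))). intros; ring.
    apply SM_scal. apply SM_mult; auto. apply SM_cos.
Qed.

Lemma SM_phi cb m k : SM (fun t => phi cb m k (cos t)).
Proof. destruct k. simpl. apply SM_const. apply (SM_Qp cb m (S k)). Qed.

Lemma SM_Dsq m a : SM (Dsq m a).
Proof.
  unfold Dsq, Dr, Di. apply SM_plus; apply SM_pow.
  apply SM_minus. apply SM_minus. apply SM_const. apply SM_scal, SM_cos. apply SM_scal, SM_cos2.
  apply (SM_ext (fun x => (-1) * (m * sin x + a * sin (2 * x)))). intros; ring.
  apply SM_scal. apply SM_plus. apply SM_scal, SM_sin. apply SM_scal, SM_sin2.
Qed.

Lemma SM_Wt m a : Good m a -> SM (Wt m a).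
Proof.
  intros HG. unfold Wt. apply SM_div. apply SM_pow, SM_sin.
  apply SM_scal, SM_Dsq. intros x. pose proof PI_RGT_0. pose proof (Dsq_pos m a HG x). nra.
Qed.

Section Mom.
Variables (mu B Cc : R).
Hypothesis HB : 0 < B.
Hypothesis HG : Good (mu / B) ((Cc / B) ^ 2 - 1).
Let cb := Cc / B.
Let m := mu / B.
Let a := cb ^ 2 - 1.

Definition Gk (k l : nat) (t : R) := phi cb m k (cos t) * phi cb m l (cos t) * Wt m a t.

Lemma SM_Gk k l : SM (Gk k l).
Proof. unfold Gk. apply SM_mult. apply SM_mult; apply SM_phi. apply SM_Wt. exact HG. Qed.

Lemma ex_Gk n k l : ex_RInt (fun t => (2 * B * cos t) ^ n * Gk k l t) (-PI) PI.
Proof.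
  apply (@ex_RInt_continuous R_CompleteNormedModule). intros. apply SM_cont.
  apply SM_mult. apply SM_pow. apply SM_scal, SM_cos. apply SM_Gk.
Qed.

Lemma RInt_Rrow k (F : nat -> R -> R) :
  (forall j, ex_RInt (F j) (-PI) PI) ->
  Rrow mu B Cc k (fun j => RInt (F j) (-PI) PI) = RInt (fun x => Rrow mu B Cc k (fun j => F j x)) (-PI) PI.
Proof.
  intros Ex. unfold Rrow. symmetry. apply is_RInt_unique.
  pose proof (@is_RInt_const R_NormedModule (-PI) PI 0) as H0.
  unfold scal in H0; simpl in H0; unfold mult in H0; simpl in H0. rewrite Rmult_0_r in H0.
  destruct k as [|k].
  - exact (is_RInt_plus _ _ _ _ _ _ (is_RInt_plus _ _ _ _ _ _ H0
       (is_RInt_scal _ _ _ (Hent mu B Cc 0 0) _ (RInt_correct _ _ _ (Ex 0%nat))))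
       (is_RInt_scal _ _ _ (Hent mu B Cc 0 1) _ (RInt_correct _ _ _ (Ex 1%nat)))).
  - exact (is_RInt_plus _ _ _ _ _ _ (is_RInt_plus _ _ _ _ _ _
       (is_RInt_scal _ _ _ (Hent mu B Cc (S k) k) _ (RInt_correct _ _ _ (Ex k)))
       (is_RInt_scal _ _ _ (Hent mu B Cc (S k) (S k)) _ (RInt_correct _ _ _ (Ex (S k)))))
       (is_RInt_scal _ _ _ (Hent mu B Cc (S k) (S (S k))) _ (RInt_correct _ _ _ (Ex (S (S k)))))).
Qed.

Lemma Rrow_G n k l x : Rrow mu B Cc k (fun j => (2 * B * cos x) ^ n * Gk j l x) =
  (2 * B * cos x) ^ (S n) * Gk k l x.
Proof.
  unfold Gk. transitivity ((2 * B * cos x) ^ n * Rrow mu B Cc k (fun j => phi cb m j (cos x)) * phi cb m l (cos x) * Wt m a x).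
  unfold Rrow. destruct k; ring.
  unfold cb, m. rewrite eigen by lra. simpl. ring.
Qed.

Lemma cb_nz : cb <> 0.
Proof.
  intros E. destruct HG as [[Ha _] | [Ha (x1 & x2 & _ & Hp & H1 & H2)]].
  - fold cb in Ha. rewrite E in Ha. simpl in Ha. lra.
  - fold cb in Hp. rewrite E in Hp. replace (-1 / (0 ^ 2 - 1)) with 1 in Hp by (simpl; field).
    apply (f_equal Cmod) in Hp. rewrite Cmod_mult, Cmod_1 in Hp. nra.
Qed.

Lemma ortho k l : RInt (Gk k l) (-PI) PI = dlt k l.
Proof.
  apply (ortho_abs mu B Cc (fun k l => RInt (Gk k l) (-PI) PI)).
  - intros k'. destruct k'. rewrite Hent_01. intro E. apply cb_nz. unfold cb. rewrite E. field. lra.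
    rewrite Hent_up. lra.
  - intros k' l'. cbv beta. apply RInt_extR. intros x _. unfold Gk. rewrite (Rmult_comm (phi cb m k' (cos x))). reflexivity.
  - intros l'. destruct l' as [|l'].
    + rewrite (RInt_extR _ (fun t => fst (Qp cb m 0 (cos t)) * Wt m a t)).
      rewrite int_Qw. reflexivity. exact HG.
      intros; unfold Gk; simpl; ring.
    + rewrite (RInt_extR _ (fun t => cb * (fst (Qp cb m (S l') (cos t)) * Wt m a t))).
      rewrite RInt_scalR. rewrite int_Qw. unfold dlt. simpl. ring. exact HG.
      apply (@ex_RInt_continuous R_CompleteNormedModule). intros. apply SM_cont.
      apply SM_mult. apply (SM_Qp cb m (S l')). apply SM_Wt. exact HG.
      intros; unfold Gk; simpl; ring.
  - intros k' l'.
    assert (forall k l, Rrow mu B Cc k (fun j => RInt (Gk j l) (-PI) PI) =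
        RInt (fun t => (2 * B * cos t) * Gk k l t) (-PI) PI).
    { intros k0 l0. rewrite <- (RInt_extR (fun t => Rrow mu B Cc k0 (fun j => (2 * B * cos t) ^ 0 * Gk j l0 t))).
      rewrite <- RInt_Rrow. apply Rrow_ext. intros j. apply RInt_extR. intros; simpl; ring.
      intros j. apply (ex_Gk 0).
      intros x _. rewrite Rrow_G. simpl. ring. }
    rewrite !H. apply RInt_extR. intros; unfold Gk; ring.
Qed.

Lemma moment n k l : Hpow mu B Cc n k l = RInt (fun t => (2 * B * cos t) ^ n * Gk k l t) (-PI) PI.
Proof.
  revert k. induction n; intros k.
  - simpl. rewrite (RInt_extR _ (Gk k l)). rewrite ortho. reflexivity. intros; ring.
  - rewrite Hpow_S. rewrite (Rrow_ext _ _ _ _ _ (fun j => RInt (fun t => (2 * B * cos t) ^ n * Gk j l t) (-PI) PI)).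
    rewrite RInt_Rrow. apply RInt_extR. intros; apply Rrow_G.
    intros; apply ex_Gk. intros; apply IHn.
Qed.

End Mom.

Definition rot (p : R * R) : R * R := (snd p, - fst p).
Fixpoint rotn (n : nat) (p : R * R) : R * R := match n with O => p | S n' => rot (rotn n' p) end.
Definition Gen (p : R * R) (x : R) := fst p * cos x + snd p * sin x.

Lemma Gen_deriv p x : is_derive (Gen p) x (Gen (rot p) x).
Proof. unfold Gen, rot. simpl. auto_derive. auto. ring. Qed.

Lemma Derive_n_Gen p k x : Derive_n (Gen p) k x = Gen (rotn k p) x.
Proof.
  revert x. induction k; intros x. reflexivity.
  simpl. rewrite (Derive_ext _ (Gen (rotn k p))) by auto.
  apply is_derive_unique. apply Gen_deriv.
Qed.

Lemma ex_derive_n_Gen p k x : ex_derive_n (Gen p) k x.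
Proof.
  destruct k. exact I. simpl. 
  apply (ex_derive_ext (Gen (rotn k p))). intros; symmetry; apply Derive_n_Gen.
  eexists. apply Gen_deriv.
Qed.

Lemma rot_norm p : Rabs (fst (rot p)) + Rabs (snd (rot p)) = Rabs (fst p) + Rabs (snd p).
Proof. unfold rot; simpl. rewrite Rabs_Ropp. ring. Qed.
Lemma rotn_norm p n : Rabs (fst (rotn n p)) + Rabs (snd (rotn n p)) = Rabs (fst p) + Rabs (snd p).
Proof. induction n. reflexivity. cbn [rotn]. rewrite rot_norm. auto. Qed.

Lemma Gen_bound p x : Rabs (Gen p x) <= Rabs (fst p) + Rabs (snd p).
Proof.
  unfold Gen. eapply Rle_trans. apply Rabs_triang. rewrite !Rabs_mult.
  assert (Rabs (cos x) <= 1) by (apply Rabs_le, COS_bound).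
  assert (Rabs (sin x) <= 1) by (apply Rabs_le, SIN_bound).
  pose proof (Rabs_pos (fst p)). pose proof (Rabs_pos (snd p)). nra.
Qed.

Definition TS (p : R * R) (N : nat) (y : R) :=
  sum_f_R0 (fun m => y ^ m / INR (fact m) * fst (rotn m p)) N.

Lemma taylor_pos p N y : 0 < y ->
  Rabs (Gen p y - TS p N y) <= y ^ S N / INR (fact (S N)) * (Rabs (fst p) + Rabs (snd p)).
Proof.
  intros Hy. destruct (Taylor_Lagrange (Gen p) N 0 y Hy) as (z & Hz & E).
  { intros; apply ex_derive_n_Gen. }
  rewrite E. unfold TS.
  replace (sum_f_R0 (fun m : nat => (y - 0) ^ m / INR (fact m) * Derive_n (Gen p) m 0) N)
    with (sum_f_R0 (fun m : nat => y ^ m / INR (fact m) * fst (rotn m p)) N).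
  2:{ apply sum_eq. intros i _. rewrite Derive_n_Gen. unfold Gen. rewrite cos_0, sin_0.
      rewrite Rminus_0_r. ring. }
  rewrite Rminus_0_r.
  match goal with |- Rabs (?A + ?B - ?A) <= _ => replace (A + B - A) with B by ring end.
  rewrite Rabs_mult. rewrite Derive_n_Gen.
  rewrite (Rabs_pos_eq (y ^ S N / INR (fact (S N)))).
  2:{ apply Rdiv_le_0_compat. apply pow_le; lra. apply lt_0_INR, lt_O_fact. }
  apply Rmult_le_compat_l.
  apply Rdiv_le_0_compat. apply pow_le; lra. apply lt_0_INR, lt_O_fact.
  rewrite <- (rotn_norm p (S N)). apply Gen_bound.
Qed.

Definition refl (p : R * R) : R * R := (fst p, - snd p).

Lemma rotn_refl p n : fst (rotn n (refl p)) = (-1) ^ n * fst (rotn n p) /\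
                      snd (rotn n (refl p)) = - ((-1) ^ n * snd (rotn n p)).
Proof.
  induction n as [|n [IH1 IH2]]. unfold refl; simpl; split; ring.
  simpl. unfold rot; simpl. rewrite IH1, IH2. split; ring.
Qed.

Lemma taylor_all p N y :
  Rabs (Gen p y - TS p N y) <= Rabs y ^ S N / INR (fact (S N)) * (Rabs (fst p) + Rabs (snd p)).
Proof.
  destruct (Rtotal_order y 0) as [Hy|[Hy|Hy]].
  - pose proof (taylor_pos (refl p) N (- y) ltac:(lra)).
    replace (Gen (refl p) (- y)) with (Gen p y) in H by (unfold Gen, refl; simpl; rewrite cos_neg, sin_neg; ring).
    replace (TS (refl p) N (- y)) with (TS p N y) in H.
    2:{ unfold TS. apply sum_eq. intros i _. rewrite (proj1 (rotn_refl p i)).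
        replace (- y) with ((-1) * y) by ring. rewrite Rpow_mult_distr.
        field_simplify. 2: apply not_0_INR, fact_neq_0.
        rewrite <- pow_mult. replace (i * 2)%nat with (2 * i)%nat by lia. rewrite pow_1_even. field. all: apply not_0_INR, fact_neq_0. }
    rewrite (Rabs_left y) by lra. unfold refl in H; simpl in H. rewrite Rabs_Ropp in H. exact H.
  - subst y. unfold TS.
    assert (forall n, sum_f_R0 (fun m => 0 ^ m / INR (fact m) * fst (rotn m p)) n = fst p).
    { induction n. simpl. field. simpl sum_f_R0. rewrite IHn. replace (0 ^ S n) with 0 by (simpl; ring). unfold Rdiv. ring. }
    rewrite H. unfold Gen. rewrite cos_0, sin_0.
    replace (fst p * 1 + snd p * 0 - fst p) with 0 by ring. rewrite Rabs_R0.
    apply Rmult_le_pos. apply Rdiv_le_0_compat. apply pow_le; lra. apply lt_0_INR, lt_O_fact.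
    pose proof (Rabs_pos (fst p)); pose proof (Rabs_pos (snd p)); lra.
  - rewrite (Rabs_pos_eq y) by lra. apply taylor_pos; auto.
Qed.

Lemma eN_lim (R0 : R) : is_lim_seq (fun N => R0 ^ S N / INR (fact (S N))) 0.
Proof.
  pose proof (is_exp_Reals R0) as H.
  assert (Ex : ex_series (fun k => scal (pow_n R0 k) (/ INR (fact k)))) by (eexists; exact H).
  apply ex_series_lim_0 in Ex.
  apply (is_lim_seq_incr_1 _ 0) in Ex.
  eapply is_lim_seq_ext; [|exact Ex]. intros n. simpl. rewrite pow_n_pow.
  unfold scal; simpl; unfold mult; simpl. unfold Rdiv. reflexivity.
Qed.

Definition cs (n : nat) := rotn n (1, 0).

Lemma Cpow_mit (t : R) (n : nat) :
  Cpow (Cmult (Copp Ci) (RtoC t)) n = (fst (cs n) * t ^ n, snd (cs n) * t ^ n).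
Proof.
  induction n. simpl. apply injective_projections; simpl; ring.
  simpl Cpow. rewrite IHn. unfold cs. simpl rotn. unfold rot. 
  apply injective_projections; simpl; ring.
Qed.

Lemma expTerm_parts mu B Cc t k l n :
  Re (expTerm mu B Cc t k l n) = fst (cs n) * t ^ n / INR (fact n) * Hpow mu B Cc n k l /\
  Im (expTerm mu B Cc t k l n) = snd (cs n) * t ^ n / INR (fact n) * Hpow mu B Cc n k l.
Proof.
  unfold expTerm. rewrite Cpow_mit.
  assert (INR (fact n) <> 0) by (apply not_0_INR, fact_neq_0).
  split; unfold Re, Im, Cdiv; simpl; field; auto.
Qed.

Lemma rotn_rot n p : rotn n (rot p) = rot (rotn n p).
Proof. induction n. reflexivity. simpl. rewrite IHn. reflexivity. Qed.

Lemma RInt_minusR (f g : R -> R) a b : ex_RInt f a b -> ex_RInt g a b ->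
  RInt (fun x => f x - g x) a b = RInt f a b - RInt g a b.
Proof. intros Hf Hg. exact (@RInt_minus R_CompleteNormedModule f g a b Hf Hg). Qed.
Lemma RInt_plusR (f g : R -> R) a b : ex_RInt f a b -> ex_RInt g a b ->
  RInt (fun x => f x + g x) a b = RInt f a b + RInt g a b.
Proof. intros Hf Hg. exact (@RInt_plus R_CompleteNormedModule f g a b Hf Hg). Qed.
Lemma exR (f : R -> R) a b : (forall x, continuous f x) -> ex_RInt f a b.
Proof. intros H. apply (@ex_RInt_continuous R_CompleteNormedModule). intros; apply H. Qed.

Lemma SM_TS p N u : SM (fun t => TS p N (u * cos t)).
Proof.
  unfold TS. induction N.
  - simpl. apply SM_const.
  - apply (SM_ext (fun t => sum_f_R0 (fun m => (u * cos t) ^ m / INR (fact m) * fst (rotn m p)) N +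
       (u * cos t) ^ S N / INR (fact (S N)) * fst (rotn (S N) p))).
    intros; reflexivity.
    apply SM_plus; auto. apply (SM_ext (fun t => (/ INR (fact (S N)) * fst (rotn (S N) p)) * (u * cos t) ^ S N)).
    intros; unfold Rdiv; ring. apply SM_scal. apply SM_pow. apply SM_scal, SM_cos.
Qed.

Lemma cont_Gen p u x : continuous (fun t => Gen p (u * cos t)) x.
Proof.
  unfold Gen. apply cont_plus; apply cont_mult; try apply cont_const.
  apply (cont_comp (fun t => u * cos t) cos). apply SM_cont, SM_scal, SM_cos. apply continuous_cos.
  apply (cont_comp (fun t => u * cos t) sin). apply SM_cont, SM_scal, SM_cos. apply continuous_sin.
Qed.

Section Series.
Variables (mu B Cc : R) (j : nat).
Hypothesis HB : 0 < B.
Hypothesis HG : Good (mu / B) ((Cc / B) ^ 2 - 1).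

Let G := Gk mu B Cc j j.

Lemma G_nonneg t : 0 <= G t.
Proof.
  unfold G, Gk, Wt. apply Rmult_le_pos. 
  apply Rle_0_sqr.
  apply Rdiv_le_0_compat. apply pow2_ge_0. pose proof PI_RGT_0. pose proof (Dsq_pos _ _ HG t). nra.
Qed.

Lemma G_int : RInt G (-PI) PI = 1.
Proof. unfold G. rewrite ortho; auto. unfold dlt. rewrite Nat.eqb_refl. reflexivity. Qed.

Lemma G_cont x : continuous G x.
Proof. unfold G. apply SM_cont. apply SM_Gk. exact HG. Qed.

Lemma series_gen (p : R * R) (t : R) :
  Rabs (fst p) + Rabs (snd p) = 1 ->
  is_series (fun n => fst (rotn n p) * t ^ n / INR (fact n) * Hpow mu B Cc n j j)
    (RInt (fun th => Gen p (2 * B * t * cos th) * G th) (-PI) PI).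
Proof.
  intros Hp. set (u := 2 * B * t).
  assert (Hsum : forall N, sum_f_R0 (fun n => fst (rotn n p) * t ^ n / INR (fact n) * Hpow mu B Cc n j j) N
     = RInt (fun th => TS p N (u * cos th) * G th) (-PI) PI).
  { induction N.
    - unfold sum_f_R0. rewrite moment by auto.
      rewrite (RInt_extR (fun th => TS p 0 (u * cos th) * G th) (fun th => fst p * G th)).
      rewrite RInt_scalR. rewrite (RInt_extR _ G). simpl. field.
      intros; unfold G; simpl; ring. apply exR, G_cont.
      intros; unfold TS; simpl; field.
    - rewrite tech5. rewrite IHN. rewrite (moment mu B Cc HB HG (S N) j j). fold G.
      rewrite <- RInt_scalR. rewrite <- RInt_plusR.
      apply RInt_extR. intros x _. unfold TS. rewrite tech5. unfold u.
      rewrite !Rpow_mult_distr. field. apply not_0_INR, fact_neq_0.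
      apply exR. intros; apply cont_mult. apply SM_cont, SM_TS. apply G_cont.
      apply exR. intros. apply cont_mult. apply cont_const. apply cont_mult.
      apply SM_cont, SM_pow, SM_scal, SM_cos. apply G_cont.
      apply exR. intros. apply cont_mult. apply SM_cont, SM_pow, SM_scal, SM_cos. apply G_cont. }
  apply is_series_Reals. intros eps Heps.
  pose proof (eN_lim (Rabs u)) as HL. apply is_lim_seq_spec in HL.
  destruct (HL (mkposreal eps Heps)) as [N0 HN0].
  exists N0. intros n Hn. unfold R_dist. rewrite Hsum.
  assert (Ex1 : ex_RInt (fun th => TS p n (u * cos th) * G th) (-PI) PI).
  { apply exR. intros; apply cont_mult. apply SM_cont, SM_TS. apply G_cont. }
  assert (Ex2 : ex_RInt (fun th => Gen p (2 * B * t * cos th) * G th) (-PI) PI).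
  { apply exR. intros; apply cont_mult. apply cont_Gen. apply G_cont. }
  rewrite <- RInt_minusR by auto.
  set (e := Rabs u ^ S n / INR (fact (S n))).
  assert (He : Rabs (e - 0) < eps) by (apply (HN0 n); lia).
  assert (e0 : 0 <= e). { unfold e. apply Rdiv_le_0_compat. apply pow_le, Rabs_pos. apply lt_0_INR, lt_O_fact. }
  rewrite Rminus_0_r, Rabs_pos_eq in He by auto.
  eapply Rle_lt_trans; [|exact He].
  eapply Rle_trans. apply abs_RInt_le. pose proof PI_RGT_0; lra.
  apply exR. intros. apply (cont_ext (fun th => TS p n (u * cos th) * G th - Gen p (2 * B * t * cos th) * G th)).
  intros; reflexivity. apply cont_plus. apply cont_mult. apply SM_cont, SM_TS. apply G_cont.
  apply (cont_ext (fun th => (-1) * (Gen p (2 * B * t * cos th) * G th))). intros; ring.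
  apply cont_mult. apply cont_const. apply cont_mult. apply cont_Gen. apply G_cont.
  eapply Rle_trans. apply (RInt_le _ (fun th => e * G th)). pose proof PI_RGT_0; lra.
  apply exR. intros. apply (cont_comp (fun th => TS p n (u * cos th) * G th - Gen p (2 * B * t * cos th) * G th) Rabs).
  apply (cont_ext (fun th => TS p n (u * cos th) * G th + (-1) * (Gen p (2 * B * t * cos th) * G th))).
  intros; ring. apply cont_plus. apply cont_mult. apply SM_cont, SM_TS. apply G_cont.
  apply cont_mult. apply cont_const. apply cont_mult. apply cont_Gen. apply G_cont.
  apply continuity_pt_filterlim. apply Rcontinuity_abs.
  apply exR. intros. apply cont_mult. apply cont_const. apply G_cont.
  intros x _. 
  replace (TS p n (u * cos x) * G x - Gen p (u * cos x) * G x)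
    with ((Gen p (u * cos x) - TS p n (u * cos x)) * (- G x)) by ring.
  rewrite Rabs_mult, Rabs_Ropp, (Rabs_pos_eq (G x)) by apply G_nonneg.
  apply Rmult_le_compat_r. apply G_nonneg.
  eapply Rle_trans. apply taylor_all. rewrite Hp, Rmult_1_r. unfold e.
  apply Rmult_le_compat_r. left. apply Rinv_0_lt_compat, lt_0_INR, lt_O_fact.
  apply pow_incr. split. apply Rabs_pos. rewrite Rabs_mult.
  assert (Rabs (cos x) <= 1) by (apply Rabs_le, COS_bound). pose proof (Rabs_pos u). nra.
  rewrite RInt_scalR. rewrite G_int. lra. apply exR, G_cont.
Qed.

End Series.

Section Decay.
Variables (mu B Cc : R) (j : nat).
Hypothesis HB : 0 < B.
Hypothesis HG : Good (mu / B) ((Cc / B) ^ 2 - 1).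

Let G := Gk mu B Cc j j.
Let ph t := phi (Cc / B) (mu / B) j (cos t).
Definition hh t := ph t * ph t * (sin t / (PI * Dsq (mu / B) ((Cc / B) ^ 2 - 1) t)).

Lemma G_hh t : G t = sin t * hh t.
Proof.
  unfold G, Gk, hh, Wt, ph. pose proof PI_RGT_0. pose proof (Dsq_pos _ _ HG t). field. nra.
Qed.

Lemma SM_hh : SM hh.
Proof.
  unfold hh, ph. apply SM_mult. apply SM_mult; apply SM_phi.
  apply SM_div. apply SM_sin. apply SM_scal, SM_Dsq.
  intros x. pose proof PI_RGT_0. pose proof (Dsq_pos _ _ HG x). nra.
Qed.

Lemma hh_PI : hh PI = 0 /\ hh (- PI) = 0.
Proof. unfold hh. rewrite sin_neg, sin_PI. split; unfold Rdiv; ring. Qed.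

Lemma is_derive_eq (f : R -> R) x l1 l2 : is_derive f x l1 -> l1 = l2 -> is_derive f x l2.
Proof. intros H E; subst; auto. Qed.

Lemma ibp (g g' : R -> R) (h' : R -> R) (u : R) :
  SMd hh h' -> u <> 0 ->
  (forall y, is_derive g y (g' y)) -> (forall y, continuous g' y) ->
  RInt (fun t => g' (u * cos t) * G t) (-PI) PI = / u * RInt (fun t => g (u * cos t) * h' t) (-PI) PI.
Proof.
  intros Hh Hu Hd Hc.
  assert (Hg : forall y, continuous g y) by (intros y; apply (deriv_cont g y (g' y)); auto).
  assert (Hcu : forall (k : R -> R), (forall y, continuous k y) -> forall x, continuous (fun t => k (u * cos t)) x).
  { intros k Hk x. apply (cont_comp (fun t => u * cos t) k). apply SM_cont, SM_scal, SM_cos. apply Hk. }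
  assert (Hcont_h : forall x, continuous hh x) by (apply SM_cont, SM_hh).
  assert (Hcont_h' : forall x, continuous h' x) by (intros x; apply Hh).
  assert (HcG : forall x, continuous G x) by (intros; apply G_cont; auto).
  set (F' := fun t => (-u) * (g' (u * cos t) * G t) + g (u * cos t) * h' t).
  assert (HI : is_RInt F' (-PI) PI (minus (g (u * cos PI) * hh PI) (g (u * cos (-PI)) * hh (-PI)))).
  { apply (is_RInt_derive (fun t => g (u * cos t) * hh t)).
    - intros x _. unfold F'.
      assert (D1 : is_derive (fun t => g (u * cos t)) x (g' (u * cos x) * (u * (- sin x)))).
      { eapply is_derive_eq. apply (is_derive_comp g (fun t => u * cos t)). apply Hd.
        apply is_derive_scal. apply is_derive_cos. unfold scal; simpl; unfold mult; simpl; ring. }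
      pose proof (@is_derive_mult R_AbsRing _ _ x _ _ D1 (proj1 (Hh x)) Rmult_comm) as D.
      apply (is_derive_eq _ _ _ _ D). unfold plus, mult; simpl. rewrite G_hh. ring.
    - intros x _. unfold F'. apply cont_plus. apply cont_mult. apply cont_const.
      apply cont_mult. apply Hcu; auto. auto. apply cont_mult. apply Hcu; auto. auto. }
  destruct hh_PI as [E1 E2]. rewrite E1, E2 in HI.
  replace (minus (g (u * cos PI) * 0) (g (u * cos (- PI)) * 0)) with 0 in HI
    by (unfold minus, plus, opp; simpl; ring).
  apply (@is_RInt_unique R_CompleteNormedModule) in HI. unfold F' in HI.
  rewrite RInt_plusR, RInt_scalR in HI.
  - apply (Rmult_eq_reg_l (- u)). 2: lra.
    replace (- u * (/ u * RInt (fun t : R => g (u * cos t) * h' t) (- PI) PI))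
      with (- RInt (fun t : R => g (u * cos t) * h' t) (- PI) PI) by (field; auto).
    lra.
  - apply exR. intros; apply cont_mult; auto.
  - apply exR. intros; apply (cont_ext (fun t => (-u) * (g' (u * cos t) * G t))). intros; reflexivity.
    apply cont_mult. apply cont_const. apply cont_mult; auto.
  - apply exR. intros; apply cont_mult; auto.
Qed.

Lemma ibp_bound (g g' : R -> R) (h' : R -> R) (u : R) :
  SMd hh h' -> u <> 0 ->
  (forall y, is_derive g y (g' y)) -> (forall y, continuous g' y) -> (forall y, Rabs (g y) <= 1) ->
  Rabs (RInt (fun t => g' (u * cos t) * G t) (-PI) PI) <= / Rabs u * RInt (fun t => Rabs (h' t)) (-PI) PI.
Proof.
  intros Hh Hu Hd Hc Hb. rewrite (ibp g g' h' u) by auto.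
  assert (Hg : forall y, continuous g y) by (intros y; apply (deriv_cont g y (g' y)); auto).
  assert (Hcont_h' : forall x, continuous h' x) by (intros x; apply Hh).
  assert (Hc1 : forall x, continuous (fun t => g (u * cos t) * h' t) x).
  { intros x. apply cont_mult; auto. apply (cont_comp (fun t => u * cos t) g). apply SM_cont, SM_scal, SM_cos. apply Hg. }
  rewrite Rabs_mult, Rabs_inv. apply Rmult_le_compat_l. left; apply Rinv_0_lt_compat, Rabs_pos_lt; auto.
  pose proof PI_RGT_0.
  eapply Rle_trans. apply abs_RInt_le. lra. apply exR; auto.
  apply RInt_le. lra.
  apply exR. intros. apply (cont_comp _ Rabs). apply Hc1. apply continuity_pt_filterlim, Rcontinuity_abs.
  apply exR. intros. apply (cont_comp _ Rabs). apply Hcont_h'. apply continuity_pt_filterlim, Rcontinuity_abs.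
  intros x _. rewrite Rabs_mult. specialize (Hb (u * cos x)). pose proof (Rabs_pos (h' x)).
  pose proof (Rabs_pos (g (u * cos x))). nra.
Qed.

End Decay.

Theorem theorem1 (B Cc mu : R) (j : nat) :
  0 < B ->
  decay_condition mu B Cc ->
  is_lim (fun t => (Cmod (amp mu B Cc t j j)) ^ 2) p_infty 0.
Proof.
  intros HB HD.
  assert (HG : Good (mu / B) ((Cc / B) ^ 2 - 1)).
  { destruct (decay_good B Cc mu HB HD) as [H|H]; [left|right]; exact H. }
  destruct (SM_hh mu B Cc j HG) as [h' Hh'].
  set (Kh := RInt (fun t => Rabs (h' t)) (-PI) PI).
  assert (Key : forall t, 0 < t -> (Cmod (amp mu B Cc t j j)) ^ 2 <= 2 * (/ (2 * B * t) * Kh) ^ 2).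
  { intros t Ht. set (u := 2 * B * t).
    assert (Hu : 0 < u) by (unfold u; nra).
    assert (ERe : Series (fun n => Re (expTerm mu B Cc t j j n)) =
       RInt (fun th => Gen (1, 0) (2 * B * t * cos th) * Gk mu B Cc j j th) (-PI) PI).
    { rewrite (Series_ext _ (fun n => fst (rotn n (1, 0)) * t ^ n / INR (fact n) * Hpow mu B Cc n j j)).
      apply is_series_unique. apply series_gen; auto. simpl. rewrite Rabs_R1, Rabs_R0; ring.
      intros n. apply (expTerm_parts mu B Cc t j j n). }
    assert (EIm : Series (fun n => Im (expTerm mu B Cc t j j n)) =
       RInt (fun th => Gen (rot (1, 0)) (2 * B * t * cos th) * Gk mu B Cc j j th) (-PI) PI).
    { rewrite (Series_ext _ (fun n => fst (rotn n (rot (1, 0))) * t ^ n / INR (fact n) * Hpow mu B Cc n j j)).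
      apply is_series_unique. apply series_gen; auto. unfold rot; simpl. rewrite Rabs_R0, Rabs_Ropp, Rabs_R1. ring.
      intros n. rewrite (proj2 (expTerm_parts mu B Cc t j j n)). rewrite rotn_rot. reflexivity. }
    assert (HA : Rabs (RInt (fun th => Gen (1, 0) (2 * B * t * cos th) * Gk mu B Cc j j th) (-PI) PI) <= / u * Kh).
    { rewrite (RInt_extR _ (fun th => cos (u * cos th) * Gk mu B Cc j j th)).
      replace (/ u * Kh) with (/ Rabs u * Kh) by (rewrite Rabs_pos_eq; lra). unfold Kh.
      apply (ibp_bound mu B Cc j HG sin cos h' u Hh'); try lra.
      apply is_derive_sin. apply continuous_cos. intros; apply Rabs_le, SIN_bound.
      intros; unfold Gen, u; simpl; ring. }
    assert (HB' : Rabs (RInt (fun th => Gen (rot (1, 0)) (2 * B * t * cos th) * Gk mu B Cc j j th) (-PI) PI) <= / u * Kh).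
    { rewrite (RInt_extR _ (fun th => (fun y => - sin y) (u * cos th) * Gk mu B Cc j j th)).
      replace (/ u * Kh) with (/ Rabs u * Kh) by (rewrite Rabs_pos_eq; lra). unfold Kh.
      apply (ibp_bound mu B Cc j HG cos (fun y => - sin y) h' u Hh'); try lra.
      apply is_derive_cos. intros y. apply (cont_ext (fun y => (-1) * sin y)). intros; ring.
      apply cont_mult. apply cont_const. apply continuous_sin.
      intros; apply Rabs_le, COS_bound.
      intros; unfold Gen, rot, u; simpl; ring. }
    set (A := RInt (fun th => Gen (1, 0) (2 * B * t * cos th) * Gk mu B Cc j j th) (-PI) PI) in *.
    set (A2 := RInt (fun th => Gen (rot (1, 0)) (2 * B * t * cos th) * Gk mu B Cc j j th) (-PI) PI) in *.
    replace (amp mu B Cc t j j) with ((A, A2) : C) by (unfold amp; rewrite ERe, EIm; reflexivity).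
    rewrite Cmod2_alt. unfold Re, Im. cbn [fst snd].
    rewrite <- (pow2_abs A), <- (pow2_abs A2).
    pose proof (Rabs_pos A). pose proof (Rabs_pos A2).
    assert (Rabs A ^ 2 <= (/ u * Kh) ^ 2) by (apply pow_incr; lra).
    assert (Rabs A2 ^ 2 <= (/ u * Kh) ^ 2) by (apply pow_incr; lra).
    fold u. lra. }
  apply is_lim_spec. intros eps. simpl.
  set (c := 2 * (/ (2 * B) * Kh) ^ 2).
  assert (Hc : 0 <= c) by (unfold c; apply Rmult_le_pos; [lra|apply pow2_ge_0]).
  exists (Rmax 1 (c / eps)). intros t Ht.
  assert (H1 : 1 < t) by (eapply Rle_lt_trans; [apply Rmax_l|exact Ht]).
  assert (H2 : c / eps < t) by (eapply Rle_lt_trans; [apply Rmax_r|exact Ht]).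
  pose proof (Key t ltac:(lra)).
  rewrite Rminus_0_r, Rabs_pos_eq by (apply pow2_ge_0).
  eapply Rle_lt_trans. exact H.
  replace (2 * (/ (2 * B * t) * Kh) ^ 2) with (c / (t * t)) by (unfold c; field; lra).
  pose proof (cond_pos eps).
  apply Rmult_lt_reg_r with (t * t). nra.
  replace (c / (t * t) * (t * t)) with c by (field; lra).
  apply (Rmult_lt_compat_r eps) in H2; auto.
  unfold Rdiv in H2. rewrite Rmult_assoc, Rinv_l, Rmult_1_r in H2 by lra. nra.
Qed.
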